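(* Let $M>2$ be an integer, $\tau>0$, $p_{\max}>0$, and $\beta_1>\beta_2>0$. Define $$R^{\mathrm{mMIMO}}_{\max}=\tau\log_2\!\left(\frac{\left(\beta_1+\beta_2+p_{\max}\beta_1\beta_2(M-2)\right)^2}{4\beta_1\beta_2}\right)\ \text{ if } p_{\max}\ge\frac{\beta_1-\beta_2}{\beta_1\beta_2(M-2)},\qquad R^{\mathrm{mMIMO}}_{\max}=\tau\log_2\!\left(1+p_{\max}\beta_1(M-2)\right)\ \text{ otherwise},$$ and $R^{\mathrm{NOMA}}_{\max}=\tau\log_2\left(1+p_{\max}\beta_1M\right)$. Let $$M^*=2+\frac{\beta_1-\beta_2}{p_{\max}\beta_1\beta_2}+\frac{2\sqrt2}{\sqrt{p_{\max}\beta_2}}.$$ Then $R^{\mathrm{mMIMO}}_{\max}\ge R^{\mathrm{NOMA}}_{\max}$ for all $M\ge M^*$.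
   Context: $R^{\mathrm{mMIMO}}_{\max}$ is the maximum two-user sum rate $\max\{\tau\log_2(1+(M-2)p_1\beta_1)+\tau\log_2(1+(M-2)p_2\beta_2): p_1,p_2\ge0,\ p_1+p_2\le p_{\max}\}$ of zero-forcing massive MIMO with perfect CSI, and $R^{\mathrm{NOMA}}_{\max}$ is the maximum two-user sum rate of the considered NOMA scheme (all power to the cell-center user). $\beta_1,\beta_2$ are the large-scale fading coefficients of the cell-center and cell-edge users, $M$ the number of base-station antennas, $p_{\max}$ the total normalized power, $\tau$ the fraction of the coherence interval used for data. *)

(* Defs.v *)
From Stdlib Require Import Reals Lra Lia.
Open Scope R_scope.

Definition log2 (x : R) : R := ln x / ln 2.

Definition R_mMIMO_max (tau pmax b1 b2 : R) (M : nat) : R :=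
  if Rle_dec ((b1 - b2) / (b1 * b2 * (INR M - 2))) pmax
  then tau * log2 ((b1 + b2 + pmax * b1 * b2 * (INR M - 2)) ^ 2 / (4 * b1 * b2))
  else tau * log2 (1 + pmax * b1 * (INR M - 2)).

Definition R_NOMA_max (tau pmax b1 : R) (M : nat) : R :=
  tau * log2 (1 + pmax * b1 * INR M).

Definition Mstar (pmax b1 b2 : R) : R :=
  2 + (b1 - b2) / (pmax * b1 * b2) + 2 * sqrt 2 / sqrt (pmax * b2).

(* Main.v *)
Require Import Defs.
From Stdlib Require Import Reals Lra.
Open Scope R_scope.

Lemma log2_le x y : 0 < x -> x <= y -> log2 x <= log2 y.
Proof.
  intros hx hxy. unfold log2.
  assert (h2 : 0 < ln 2) by (rewrite <- ln_1; apply ln_increasing; lra).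
  apply Rmult_le_compat_r. left; apply Rinv_0_lt_compat; exact h2.
  destruct hxy as [h|h]. left; apply ln_increasing; lra. rewrite h; lra.
Qed.

Theorem mainTheorem3 (tau pmax b1 b2 : R) (M : nat) :
  (2 < M)%nat -> 0 < tau -> 0 < pmax -> 0 < b2 -> b2 < b1 ->
  Mstar pmax b1 b2 <= INR M ->
  R_NOMA_max tau pmax b1 M <= R_mMIMO_max tau pmax b1 b2 M.
Proof.
  intros hM ht hp hb hab hs. unfold Mstar in hs.
  assert (hM3 : 3 <= INR M) by (replace 3 with (INR 3) by (simpl; lra); apply le_INR; exact hM).
  set (N := INR M - 2) in *.
  assert (hN : 1 <= N) by (unfold N; lra).
  set (t := sqrt (pmax * b2)) in *.
  assert (htp : 0 < t) by (apply sqrt_lt_R0; nra).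
  assert (htt : t * t = pmax * b2) by (apply sqrt_sqrt; nra).
  set (s := sqrt 2) in *.
  assert (hsp : 0 < s) by (apply sqrt_lt_R0; lra).
  assert (hss : s * s = 2) by (apply sqrt_sqrt; lra).

  set (q := (b1 - b2) / (pmax * b1 * b2)) in *.
  assert (hq : q * (pmax * b1 * b2) = b1 - b2) by (unfold q; field; lra).
  set (r := 2 * s / t) in *.
  assert (hr : r * t = 2 * s) by (unfold r; field; lra).
  assert (hr0 : 0 < r) by (unfold r; apply Rdiv_lt_0_compat; lra).
assert (hN2 : N >= q + r) by (unfold N; lra).
  assert (hpab : 0 < pmax * b1 * b2) by (apply Rmult_lt_0_compat; nra).
  assert (key : pmax * b1 * b2 * N >= (b1 - b2) + 2 * s * b1 * t).
  { assert (pmax * b1 * b2 * N >= pmax*b1*b2*q + pmax*b1*b2*r) by nra.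
    assert (pmax*b1*b2*r = 2*s*b1*t).
    { replace (pmax*b1*b2) with (b1*(t*t)) by (rewrite htt; ring).
      replace (b1*(t*t)*r) with (b1*t*(r*t)) by ring. rewrite hr. ring. }
    nra. }
  unfold R_NOMA_max, R_mMIMO_max. fold N.
  destruct (Rle_dec ((b1 - b2) / (b1 * b2 * N)) pmax) as [h|h].
  - apply Rmult_le_compat_l; [lra|]. apply log2_le.
    + assert (0 < pmax * b1 * INR M) by (apply Rmult_lt_0_compat; nra). lra.
    + apply (Rmult_le_reg_r (4 * b1 * b2)). nra.
      match goal with |- _ <= ?A / ?B * ?B => replace (A / B * B) with A by (field; nra) end.
      replace (INR M) with (N + 2) by (unfold N; ring).
      assert (hx : pmax * b1 * b2 * N - (b1 - b2) >= 2 * s * b1 * t) by lra.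
      assert (hsq : (pmax * b1 * b2 * N - (b1 - b2))^2 >= (2*s*b1*t)^2).
      { assert (0 <= 2*s*b1*t) by (apply Rmult_le_pos; [nra|lra]). nra. }
      assert ((2*s*b1*t)^2 = 8 * pmax * b1^2 * b2).
      { replace ((2*s*b1*t)^2) with (4*(s*s)*b1^2*(t*t)) by ring. rewrite hss, htt. ring. }
      nra.
  - exfalso. apply h.
    assert (0 < b1 * b2 * N) by (apply Rmult_lt_0_compat; nra).
    apply (Rmult_le_reg_r (b1 * b2 * N)); [assumption|].
    match goal with |- ?A / ?B * ?B <= _ => replace (A / B * B) with A by (field; nra) end. nra.
Qed.
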